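(* Let $A:\mathscr T\to\mathscr U$ be a morphism of $\mathscr J$-theories whose commutant $\mathscr T^\perp_A$ exists. Then $\mathscr T^\perp_A$ is a strong subtheory of $\mathscr U$: the $\mathscr V$-functor $\iota:\mathscr T^\perp_A\to\mathscr U$ that is the identity on objects and whose hom-components are the end projections at $I$, $\mathscr T^\perp_A(J,K)\to\mathscr U([J,A]I,[K,A]I)=\mathscr U(J,K)$, is a morphism of $\mathscr J$-theories whose hom-components are strong monomorphisms in $\mathscr V$.
   Context: $(\mathscr V,\otimes,I)$ is a closed symmetric monoidal category, $\underline{\mathscr V}$ the associated $\mathscr V$-category; everything is $\mathscr V$-enriched. A system of arities is a full sub-$\mathscr V$-category $\mathscr J\hookrightarrow\underline{\mathscr V}$ containing $I$ and closed under $\otimes$. A cotensor $[V,C]$ of $C\in\mathscr C$ by $V\in\mathscr V$ is an object with counit $V\to\mathscr C([V,C],C)$ inducing an isomorphism $\mathscr C(-,[V,C])\cong\underline{\mathscr V}(V,\mathscr C(-,C))$. A $\mathscr J$-theory is a $\mathscr V$-category $\mathscr T$ with $\mathrm{ob}\,\mathscr T=\mathrm{ob}\,\mathscr J$ and an identity-on-objects $\mathscr V$-functor $\tau:\mathscr J^{\mathrm{op}}\to\mathscr T$ preserving cotensors by objects of $\mathscr J$; each $J$ is a cotensor $[J,I]$ in $\mathscr T$ with counit $J\cong\underline{\mathscr V}(I,J)=\mathscr J^{\mathrm{op}}(J,I)\xrightarrow{\tau}\mathscr T(J,I)$. A morphism of $\mathscr J$-theories $(\mathscr T,\tau)\to(\mathscr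 U,\upsilon)$ is a $\mathscr V$-functor $A$ with $A\tau=\upsilon$. A strong subtheory of $\mathscr U$ is a morphism into $\mathscr U$ whose hom-components are strong monomorphisms. Fix designated cotensors $[J,K]$ in $\mathscr U$ with $[J,I]=J$ and $[I,K]=K$, inducing $\mathscr V$-functors $[J,-]:\mathscr U\to\mathscr U$; put $[J,A]=[J,-]\circ A$ (so $[J,A]I=J$). The commutant $\mathscr T^\perp_A$ is the $\mathscr J$-theory with objects those of $\mathscr J$, hom-objects $\mathscr T^\perp_A(J,K)=\int_{L\in\mathscr T}\mathscr U([J,A]L,[K,A]L)$ (objects of $\mathscr V$-natural transformations $[J,A]\Rightarrow[K,A]$), composition/identities of natural transformations, and $\mathscr J$-theory structure induced by the cotensors $[J,A]$ of $A$; it exists when these ends exist. *)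

(* Defs.v *)
From Stdlib Require Import Utf8.

Set Implicit Arguments.
Unset Strict Implicit.

Record CSMC := {
  ob : Type;
  hom : ob -> ob -> Type;
  comp : forall {a b c : ob}, hom b c -> hom a b -> hom a c;
  idm : forall a : ob, hom a a;
  comp_assoc : forall a b c d (f : hom a b) (g : hom b c) (h : hom c d),
      comp h (comp g f) = comp (comp h g) f;
  comp_idl : forall a b (f : hom a b), comp (idm b) f = f;
  comp_idr : forall a b (f : hom a b), comp f (idm a) = f;
  tens : ob -> ob -> ob;
  tensm : forall {a b c d : ob}, hom a b -> hom c d -> hom (tens a c) (tens b d);
  tensm_id : forall a b, tensm (idm a) (idm b) = idm (tens a b);
  tensm_comp : forall a b c a' b' c' (f : hom a b) (g : hom b c)
                 (f' : hom a' b') (g' : hom b' c'),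
      tensm (comp g f) (comp g' f') = comp (tensm g g') (tensm f f');
  unit : ob;
  assoc : forall a b c, hom (tens (tens a b) c) (tens a (tens b c));
  assoc_inv : forall a b c, hom (tens a (tens b c)) (tens (tens a b) c);
  assoc_iso1 : forall a b c, comp (assoc_inv a b c) (assoc a b c) = idm _;
  assoc_iso2 : forall a b c, comp (assoc a b c) (assoc_inv a b c) = idm _;
  assoc_nat : forall a b c a' b' c' (f : hom a a') (g : hom b b') (h : hom c c'),
      comp (assoc a' b' c') (tensm (tensm f g) h)
      = comp (tensm f (tensm g h)) (assoc a b c);
  lunit : forall a, hom (tens unit a) a;
  lunit_inv : forall a, hom a (tens unit a);
  lunit_iso1 : forall a, comp (lunit_inv a) (lunit a) = idm _;
  lunit_iso2 : forall a, comp (lunit a) (lunit_inv a) = idm _;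
  lunit_nat : forall a b (f : hom a b),
      comp (lunit b) (tensm (idm unit) f) = comp f (lunit a);
  runit : forall a, hom (tens a unit) a;
  runit_inv : forall a, hom a (tens a unit);
  runit_iso1 : forall a, comp (runit_inv a) (runit a) = idm _;
  runit_iso2 : forall a, comp (runit a) (runit_inv a) = idm _;
  runit_nat : forall a b (f : hom a b),
      comp (runit b) (tensm f (idm unit)) = comp f (runit a);
  pentagon : forall a b c d,
      comp (assoc a b (tens c d)) (assoc (tens a b) c d)
      = comp (tensm (idm a) (assoc b c d))
             (comp (assoc a (tens b c) d) (tensm (assoc a b c) (idm d)));
  triangle : forall a b,
      comp (tensm (idm a) (lunit b)) (assoc a unit b) = tensm (runit a) (idm b);
  sym : forall a b, hom (tens a b) (tens b a);
  sym_nat : forall a b a' b' (f : hom a a') (g : hom b b'),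
      comp (sym a' b') (tensm f g) = comp (tensm g f) (sym a b);
  sym_inv : forall a b, comp (sym b a) (sym a b) = idm _;
  hexagon : forall a b c,
      comp (assoc b c a) (comp (sym a (tens b c)) (assoc a b c))
      = comp (tensm (idm b) (sym a c))
             (comp (assoc b a c) (tensm (sym a b) (idm c)));
  ihom : ob -> ob -> ob;
  ev : forall a b, hom (tens (ihom a b) a) b;
  cur : forall {c a b : ob}, hom (tens c a) b -> hom c (ihom a b);
  ev_cur : forall c a b (f : hom (tens c a) b),
      comp (ev a b) (tensm (cur f) (idm a)) = f;
  cur_ev : forall c a b (g : hom c (ihom a b)),
      cur (comp (ev a b) (tensm g (idm a))) = g
}.

Arguments ob : clear implicits.
Arguments hom : clear implicits.
Arguments comp {_ _ _ _} _ _.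
Arguments idm {_} _.
Arguments tens {_} _ _.
Arguments tensm {_ _ _ _ _} _ _.
Arguments unit {_}.
Arguments assoc {_} _ _ _.
Arguments lunit {_} _.
Arguments runit {_} _.
Arguments sym {_} _ _.
Arguments ihom {_} _ _.
Arguments ev {_} _ _.
Arguments cur {_ _ _ _} _.

Declare Scope V_scope.
Open Scope V_scope.
Notation "g ∘ f" := (comp g f) (at level 40, left associativity) : V_scope.
Notation "a ⊗₀ b" := (tens a b) (at level 35, right associativity) : V_scope.
Notation "f ⊗₁ g" := (tensm f g) (at level 35, right associativity) : V_scope.

Section Enriched.
Variable V : CSMC.

Definition is_iso {a b : ob V} (f : hom V a b) : Prop :=
  exists g : hom V b a, g ∘ f = idm a /\ f ∘ g = idm b.

Definition is_mono {a b : ob V} (m : hom V a b) : Prop :=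
  forall c (f g : hom V c a), m ∘ f = m ∘ g -> f = g.

Definition is_epi {a b : ob V} (e : hom V a b) : Prop :=
  forall c (f g : hom V b c), f ∘ e = g ∘ e -> f = g.

(* strong monomorphism: a monomorphism with the unique (by monicity)
   diagonal fill-in property against every epimorphism *)
Definition strong_mono {x y : ob V} (m : hom V x y) : Prop :=
  is_mono m /\
  forall a b (e : hom V a b), is_epi e ->
    forall (u : hom V a x) (v : hom V b y), v ∘ e = m ∘ u ->
      exists d : hom V b x, d ∘ e = u /\ m ∘ d = v.

(* The underlying V-category \underline{V}: composition and identities. *)
Definition ulcomp (X Y Z : ob V) : hom V (ihom Y Z ⊗₀ ihom X Y) (ihom X Z) :=
  cur (ev Y Z ∘ (idm (ihom Y Z) ⊗₁ ev X Y) ∘ assoc (ihom Y Z) (ihom X Y) X).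

Definition ulid (X : ob V) : hom V unit (ihom X X) := cur (lunit X).

(* Raw V-categories (data); the axioms are the predicate is_VCat. *)
Record VCat := {
  vob : Type;
  vhom : vob -> vob -> ob V;
  vcomp : forall a b c, hom V (vhom b c ⊗₀ vhom a b) (vhom a c);
  vid : forall a, hom V unit (vhom a a)
}.
Arguments vhom : clear implicits.
Arguments vcomp : clear implicits.
Arguments vid : clear implicits.

Definition is_VCat (C : VCat) : Prop :=
  (forall a b c d,
      vcomp C a c d ∘ (idm _ ⊗₁ vcomp C a b c) ∘ assoc _ _ _
      = vcomp C a b d ∘ (vcomp C b c d ⊗₁ idm _)) /\
  (forall a b, vcomp C a b b ∘ (vid C b ⊗₁ idm _) = lunit _) /\
  (forall a b, vcomp C a a b ∘ (idm _ ⊗₁ vid C a) = runit _).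

Record VFun (C D : VCat) := {
  fob : vob C -> vob D;
  fhom : forall a b, hom V (vhom C a b) (vhom D (fob a) (fob b))
}.
Arguments fob {C D} _ _.
Arguments fhom {C D} _ _ _.

Definition is_VFunctor (C D : VCat) (F : VFun C D) : Prop :=
  (forall a b c, fhom F a c ∘ vcomp C a b c
                 = vcomp D _ _ _ ∘ (fhom F b c ⊗₁ fhom F a b)) /\
  (forall a, fhom F a a ∘ vid C a = vid D (fob F a)).

(* Cotensors [X, Cc] = Y with counit c : X → C(Y, Cc): the induced map
   C(Z, Y) → [X, C(Z, Cc)] is an isomorphism for every Z. *)
Definition cot_map (C : VCat) (X : ob V) (Cc Y : vob C)
    (c : hom V X (vhom C Y Cc)) (Z : vob C)
  : hom V (vhom C Z Y) (ihom X (vhom C Z Cc)) :=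
  cur (vcomp C Z Y Cc ∘ sym _ _ ∘ (idm (vhom C Z Y) ⊗₁ c)).

Definition is_cotensor (C : VCat) (X : ob V) (Cc Y : vob C)
    (c : hom V X (vhom C Y Cc)) : Prop :=
  forall Z, is_iso (cot_map c Z).

Definition wedge (C D : VCat) (F G : VFun C D) (X : ob V)
    (p : forall L, hom V X (vhom D (fob F L) (fob G L))) : Prop :=
  forall L L' : vob C,
    vcomp D (fob F L) (fob F L') (fob G L') ∘ (p L' ⊗₁ fhom F L L')
    = vcomp D (fob F L) (fob G L) (fob G L') ∘ (fhom G L L' ⊗₁ p L)
        ∘ sym X (vhom C L L').

(* (E, proj) is an end, with factorization map [factor] (only specified
   on wedges). *)
Definition is_end (C D : VCat) (F G : VFun C D) (E : ob V)
    (proj : forall L, hom V E (vhom D (fob F L) (fob G L)))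
    (factor : forall X, (forall L, hom V X (vhom D (fob F L) (fob G L))) ->
              hom V X E) : Prop :=
  wedge proj /\
  forall X q, wedge (X := X) q ->
    (forall L, proj L ∘ factor X q = q L) /\
    (forall h : hom V X E, (forall L, proj L ∘ h = q L) -> h = factor X q).

(* Systems of arities: full sub-V-category of \underline{V} on a class of
   objects containing I and closed under ⊗. *)
Record Arities := {
  ar : ob V -> Prop;
  ar_unit : ar unit;
  ar_tens : forall a b, ar a -> ar b -> ar (a ⊗₀ b)
}.
Arguments ar : clear implicits.

Variable S : Arities.

Definition Jobj : Type := { X : ob V | ar S X }.
Definition JI : Jobj := exist _ unit (ar_unit S).

(* J^op : J^op(J, K) = J(K, J) = [K, J] *)
Definition Jop : VCat := {|
  vob := Jobj;
  vhom := fun J K => ihom (proj1_sig K) (proj1_sig J);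
  vcomp := fun a b c => ulcomp (proj1_sig c) (proj1_sig b) (proj1_sig a) ∘ sym _ _;
  vid := fun a => ulid (proj1_sig a)
|}.

(* Raw J-theory data: a V-category with objects those of J, and the
   hom-components of the identity-on-objects V-functor τ : J^op → T. *)
Record JTh := {
  thom : Jobj -> Jobj -> ob V;
  tcomp : forall a b c, hom V (thom b c ⊗₀ thom a b) (thom a c);
  tid : forall a, hom V unit (thom a a);
  ttau : forall J K : Jobj, hom V (ihom (proj1_sig K) (proj1_sig J)) (thom J K)
}.
Arguments thom : clear implicits.
Arguments tcomp : clear implicits.
Arguments tid : clear implicits.
Arguments ttau : clear implicits.

Definition thCat (T : JTh) : VCat :=
  {| vob := Jobj; vhom := thom T; vcomp := tcomp T; vid := tid T |}.

Definition tauF (T : JTh) : VFun Jop (thCat T) :=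
  @Build_VFun Jop (thCat T) (fun x => x) (ttau T).

Definition is_Jtheory (T : JTh) : Prop :=
  is_VCat (thCat T) /\ is_VFunctor (tauF T) /\
  (forall (X Cc Y : Jobj) (c : hom V (proj1_sig X) (vhom Jop Y Cc)),
     is_cotensor (C := Jop) c ->
     is_cotensor (C := thCat T) (ttau T Y Cc ∘ c)).

(* Morphisms of J-theories: V-functors A with A τ = υ; in particular A is
   the identity on objects, so A is given by its hom-components. *)
Definition mkFun (T U : JTh) (A : forall J K, hom V (thom T J K) (thom U J K))
  : VFun (thCat T) (thCat U) := @Build_VFun (thCat T) (thCat U) (fun x => x) A.

Definition is_Jmorphism (T U : JTh)
    (A : forall J K, hom V (thom T J K) (thom U J K)) : Prop :=
  is_VFunctor (mkFun A) /\ (forall J K, A J K ∘ ttau T J K = ttau U J K).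

Definition castU {U : JTh} {X X' Y Y' : Jobj} (e1 : X = X') (e2 : Y = Y')
  : hom V (thom U X Y) (thom U X' Y') :=
  match e1 in _ = X1 return hom V (thom U X Y) (thom U X1 Y') with
  | eq_refl => match e2 in _ = Y1 return hom V (thom U X Y) (thom U X Y1) with
               | eq_refl => idm _ end
  end.

(* Designated cotensors [J, K] in U (with the inverses of the
   comparison isomorphisms as data) and [J, I] = J, [I, K] = K. *)
Record DesigCot (U : JTh) := {
  dcot : Jobj -> Jobj -> Jobj;
  dcounit : forall J K, hom V (proj1_sig J) (thom U (dcot J K) K);
  dinv : forall J K Z, hom V (ihom (proj1_sig J) (thom U Z K)) (thom U Z (dcot J K));
  dcot_JI : forall J, dcot J JI = J;
  dcot_IK : forall K, dcot JI K = K
}.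
Arguments dcot {U} _ _ _.
Arguments dcounit {U} _ _ _.
Arguments dinv {U} _ _ _ _.
Arguments dcot_JI {U} _ _.
Arguments dcot_IK {U} _ _.

Definition is_designated (U : JTh) (D : DesigCot U) : Prop :=
  (forall J K Z,
     dinv D J K Z ∘ cot_map (C := thCat U) (dcounit D J K) Z = idm _ /\
     cot_map (C := thCat U) (dcounit D J K) Z ∘ dinv D J K Z = idm _) /\
  (* [J, I] = J with the counit J ≅ [I, J] = J^op(J, I) → U(J, I) *)
  (forall J, castU (dcot_JI D J) eq_refl ∘ dcounit D J JI
             = ttau U J JI ∘ cur (runit (proj1_sig J))) /\
  (* [I, K] = K with counit the identity of K *)
  (forall K, castU (dcot_IK D K) eq_refl ∘ dcounit D JI K = tid U K).

(* The V-functor [J, -] : U → U on hom-objects. *)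
Definition cotf (U : JTh) (D : DesigCot U) (J K L : Jobj)
  : hom V (thom U K L) (thom U (dcot D J K) (dcot D J L)) :=
  dinv D J L (dcot D J K)
    ∘ cur (tcomp U (dcot D J K) K L ∘ (idm (thom U K L) ⊗₁ dcounit D J K)).

(* [J, A] = [J, -] ∘ A *)
Definition cotA (T U : JTh) (A : forall J K, hom V (thom T J K) (thom U J K))
    (D : DesigCot U) (J : Jobj) : VFun (thCat T) (thCat U) :=
  @Build_VFun (thCat T) (thCat U) (fun L => dcot D J L)
    (fun L L' => cotf D J L L' ∘ A L L').

(* The map J^op(J, K) = [K, J] → U([J, X], [K, X]) induced by cotensors. *)
Definition cotV (U : JTh) (D : DesigCot U) (J K X : Jobj)
  : hom V (ihom (proj1_sig K) (proj1_sig J)) (thom U (dcot D J X) (dcot D K X)) :=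
  dinv D K X (dcot D J X) ∘ cur (dcounit D J X ∘ ev (proj1_sig K) (proj1_sig J)).

(* Chosen ends T^⊥_A(J, K) = ∫_L U([J,A]L, [K,A]L). *)
Record CommEnds (U : JTh) (D : DesigCot U) := {
  cE : Jobj -> Jobj -> ob V;
  cproj : forall J K L, hom V (cE J K) (thom U (dcot D J L) (dcot D K L));
  cfactor : forall J K X,
      (forall L, hom V X (thom U (dcot D J L) (dcot D K L))) -> hom V X (cE J K)
}.
Arguments cE {U D} _ _ _.
Arguments cproj {U D} _ _ _ _.
Arguments cfactor {U D} _ _ _ _ _.

Definition is_commutant_ends (T U : JTh)
    (A : forall J K, hom V (thom T J K) (thom U J K))
    (D : DesigCot U) (E : CommEnds D) : Prop :=
  forall J K, is_end (F := cotA A D J) (G := cotA A D K)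
                     (cproj E J K) (cfactor E J K).

(* The commutant T^⊥_A: composition and identities of V-natural
   transformations, and J-theory structure induced by the cotensors. *)
Definition commutant (U : JTh) (D : DesigCot U) (E : CommEnds D) : JTh := {|
  thom := cE E;
  tcomp := fun J K M =>
    cfactor E J M (cE E K M ⊗₀ cE E J K)
      (fun L => tcomp U _ _ _ ∘ (cproj E K M L ⊗₁ cproj E J K L));
  tid := fun J => cfactor E J J unit (fun L => tid U (dcot D J L));
  ttau := fun J K => cfactor E J K _ (fun L => cotV D J K L)
|}.

Definition iota (U : JTh) (D : DesigCot U) (E : CommEnds D) (J K : Jobj)
  : hom V (cE E J K) (thom U J K) :=
  castU (dcot_JI D J) (dcot_JI D K) ∘ cproj E J K JI.

End Enriched.

(* Main.v *)
Require Import Defs.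
From Stdlib Require Import Utf8 IndefiniteDescription.

Section Mon.
Context {V : CSMC}.
Notation "1" := (@idm V _).

Lemma cA {a b c d} (f : hom V a b) (g : hom V b c) (h : hom V c d) :
  h ∘ (g ∘ f) = h ∘ g ∘ f.
Proof. apply comp_assoc. Qed.
Lemma cl {a b} (f : hom V a b) : 1 ∘ f = f. Proof. apply comp_idl. Qed.
Lemma cr {a b} (f : hom V a b) : f ∘ 1 = f. Proof. apply comp_idr. Qed.
Lemma tc {a b c a' b' c'} (f : hom V a b) (g : hom V b c) (f' : hom V a' b') (g' : hom V b' c') :
  (g ∘ f) ⊗₁ (g' ∘ f') = (g ⊗₁ g') ∘ (f ⊗₁ f').
Proof. apply tensm_comp. Qed.
Lemma ti (a b : ob V) : (idm a) ⊗₁ (idm b) = idm (tens a b).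
Proof. apply tensm_id. Qed.

Lemma tsplit {a b c d} (f : hom V a b) (g : hom V c d) :
  f ⊗₁ g = (f ⊗₁ 1) ∘ (1 ⊗₁ g).
Proof. rewrite <- tc, cl, cr. reflexivity. Qed.
Lemma tsplit' {a b c d} (f : hom V a b) (g : hom V c d) :
  f ⊗₁ g = (1 ⊗₁ g) ∘ (f ⊗₁ 1).
Proof. rewrite <- tc, cl, cr. reflexivity. Qed.
Lemma tcl {a b c d e} (f : hom V a b) (g : hom V b c) (h : hom V d e) :
  (g ∘ f) ⊗₁ h = (g ⊗₁ h) ∘ (f ⊗₁ 1).
Proof. rewrite <- tc, cr. reflexivity. Qed.
Lemma tcr {a b c d e} (f : hom V a b) (g : hom V b c) (h : hom V d e) :
  h ⊗₁ (g ∘ f) = (h ⊗₁ g) ∘ (1 ⊗₁ f).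
Proof. rewrite <- tc, cr. reflexivity. Qed.

Lemma tcl2 {a b c d e} (f : hom V a b) (g : hom V b c) (h : hom V d e) :
  (g ∘ f) ⊗₁ h = (g ⊗₁ 1) ∘ (f ⊗₁ h).
Proof. rewrite <- tc, cl. reflexivity. Qed.
Lemma tcr2 {a b c d e} (f : hom V a b) (g : hom V b c) (h : hom V d e) :
  h ⊗₁ (g ∘ f) = (1 ⊗₁ g) ∘ (h ⊗₁ f).
Proof. rewrite <- tc, cl. reflexivity. Qed.

Lemma cancel_l {a b c} (r : hom V b a) (m : hom V a b) (x y : hom V c a) :
  r ∘ m = 1 -> m ∘ x = m ∘ y -> x = y.
Proof. intros H E. rewrite <- (cl x), <- (cl y), <- H, <- !cA, E. reflexivity. Qed.
Lemma cancel_r {a b c} (r : hom V b a) (m : hom V a b) (x y : hom V a c) :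
  r ∘ m = 1 -> x ∘ r = y ∘ r -> x = y.
Proof. intros H E. rewrite <- (cr x), <- (cr y), <- H, !cA, E. reflexivity. Qed.

Notation α := (assoc _ _ _).
Notation αi := (assoc_inv (c0:=V) _ _ _).
Notation λ' := (lunit _).
Notation ρ := (runit _).

Lemma tensI_inj {a b} (f g : hom V a b) : f ⊗₁ idm unit = g ⊗₁ idm unit -> f = g.
Proof.
  intro E. apply (cancel_r (runit a) (runit_inv (c0:=V) a)); [apply runit_iso2|].
  rewrite <- !runit_nat, E. reflexivity.
Qed.
Lemma Itens_inj {a b} (f g : hom V a b) : idm unit ⊗₁ f = idm unit ⊗₁ g -> f = g.
Proof.
  intro E. apply (cancel_r (lunit a) (lunit_inv (c0:=V) a)); [apply lunit_iso2|].
  rewrite <- !lunit_nat, E. reflexivity.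
Qed.

Lemma iso_t_l {a b c} (f : hom V a b) (g : hom V b a) : g ∘ f = 1 ->
  (g ⊗₁ idm c) ∘ (f ⊗₁ idm c) = 1.
Proof. intro H. rewrite <- tc, H, cl, ti. reflexivity. Qed.
Lemma iso_t_r {a b c} (f : hom V a b) (g : hom V b a) : g ∘ f = 1 ->
  (idm c ⊗₁ g) ∘ (idm c ⊗₁ f) = 1.
Proof. intro H. rewrite <- tc, H, cl, ti. reflexivity. Qed.

Lemma K1 (a b : ob V) : runit (a ⊗₀ b) = (idm a ⊗₁ runit b) ∘ assoc a b unit.
Proof.
  apply tensI_inj.
  apply (cancel_l (assoc_inv (c0:=V) _ _ _) (assoc a b unit)); [apply assoc_iso1|].
  assert (E1 : assoc a b unit ∘ (runit (a ⊗₀ b) ⊗₁ idm unit)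
     = (idm a ⊗₁ (idm b ⊗₁ lunit unit)) ∘ assoc a b (unit ⊗₀ unit) ∘ assoc (a ⊗₀ b) unit unit).
  { rewrite <- triangle, cA, <- ti, assoc_nat. reflexivity. }
  rewrite E1, <- cA, pentagon, !cA, <- tc, cl, <- cA, triangle.
  rewrite cA, <- assoc_nat, <- cA, <- tc, cl. reflexivity.
Qed.

Lemma K2 (a b : ob V) : lunit (a ⊗₀ b) ∘ assoc unit a b = lunit a ⊗₁ idm b.
Proof.
  apply Itens_inj.
  assert (H : (idm unit ⊗₁ (lunit (a ⊗₀ b) ∘ assoc unit a b)) ∘ assoc unit (unit ⊗₀ a) b
              ∘ (assoc unit unit a ⊗₁ idm b)
            = (idm unit ⊗₁ (lunit a ⊗₁ idm b)) ∘ assoc unit (unit ⊗₀ a) b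
              ∘ (assoc unit unit a ⊗₁ idm b)).
  { rewrite tcr, <- !cA, <- pentagon, cA, triangle, <- (ti a b), <- assoc_nat.
    rewrite <- triangle, tcl.
    rewrite !cA, <- (assoc_nat (idm unit) (lunit a) (idm b)).
    reflexivity. }
  apply (cancel_r _ _ _ _ (iso_t_l _ _ (assoc_iso2 unit unit a))) in H.
  apply (cancel_r _ _ _ _ (assoc_iso2 _ _ _)) in H. exact H.
Qed.

Lemma K4 (x : ob V) : runit x = lunit x ∘ sym x unit.
Proof.
  apply tensI_inj.
  apply (cancel_l (sym unit x) (sym x unit)); [apply sym_inv|].
  assert (H := hexagon x unit unit).
  apply (f_equal (fun k => lunit (unit ⊗₀ x) ∘ k)) in H.
  rewrite !cA, K2 in H.
  rewrite <- sym_nat, <- cA, triangle in H.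
  rewrite lunit_nat, <- (cA (assoc _ _ _)), K2 in H.
  rewrite H, <- cA, <- tc, cl. reflexivity.
Qed.

Lemma K4' (x : ob V) : runit x ∘ sym unit x = lunit x.
Proof. rewrite K4, <- cA, sym_inv, cr. reflexivity. Qed.

Lemma H2 (A B C : ob V) : sym (A ⊗₀ B) C =
  assoc C A B ∘ (sym A C ⊗₁ idm B) ∘ assoc_inv A C B ∘ (idm A ⊗₁ sym B C) ∘ assoc A B C.
Proof.
  set (R := assoc C A B ∘ (sym A C ⊗₁ idm B) ∘ assoc_inv A C B ∘ (idm A ⊗₁ sym B C) ∘ assoc A B C).
  assert (E : R ∘ sym C (A ⊗₀ B) = idm _).
  { assert (Hx : assoc A B C ∘ sym C (A ⊗₀ B) =
       (idm A ⊗₁ sym C B) ∘ assoc A C B ∘ (sym C A ⊗₁ idm B) ∘ assoc_inv C A B).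
    { rewrite <- (cr (assoc A B C ∘ sym C (A ⊗₀ B))), <- (assoc_iso2 C A B), cA.
      rewrite <- (cA (assoc C A B)), hexagon, !cA. reflexivity. }
    unfold R. rewrite <- cA, Hx, !cA.
    rewrite <- (cA (idm A ⊗₁ sym C B)), <- tc, sym_inv, cl, ti, cr.
    rewrite <- (cA (assoc A C B)), assoc_iso1, cr.
    rewrite <- (cA (sym C A ⊗₁ idm B)), <- tc, sym_inv, cl, ti, cr.
    apply assoc_iso2. }
  transitivity (R ∘ sym C (A ⊗₀ B) ∘ sym (A ⊗₀ B) C).
  - rewrite E, cl. reflexivity.
  - rewrite <- cA, sym_inv, cr. reflexivity.
Qed.

Lemma cur_nat {a b c d} (f : hom V (b ⊗₀ a) c) (g : hom V d b) : cur f ∘ g = cur (f ∘ (g ⊗₁ idm a)).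
Proof.
  rewrite <- (cur_ev (cur f ∘ g)). f_equal. rewrite tcl, cA, ev_cur. reflexivity.
Qed.
Lemma cur_inj {a b c} (f g : hom V (c ⊗₀ a) b) : cur f = cur g -> f = g.
Proof. intro E. rewrite <- (ev_cur f), <- (ev_cur g), E. reflexivity. Qed.

Lemma epi_tens {a b c} (e : hom V a b) : is_epi e -> is_epi (e ⊗₁ idm c).
Proof.
  intros He d f g E. apply cur_inj. apply He. rewrite !cur_nat, E. reflexivity.
Qed.
End Mon.

Section Enr.
Context {V : CSMC} {S : Arities V} {U : JTh S}.
Notation Ob := (Jobj S).
Notation H a b := (thom U a b).

Definition mult {a b c : Ob} {W1 W2 : ob V} (x : hom V W1 (H b c)) (y : hom V W2 (H a b))
  : hom V (W1 ⊗₀ W2) (H a c) := tcomp U a b c ∘ (x ⊗₁ y).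

Lemma m_comp {a b c : Ob} {W1 W2 W1' W2'} (x : hom V W1 (H b c)) (y : hom V W2 (H a b))
  (f : hom V W1' W1) (g : hom V W2' W2) :
  mult (x ∘ f) (y ∘ g) = mult x y ∘ (f ⊗₁ g).
Proof. unfold mult. rewrite tc, cA. reflexivity. Qed.
Lemma m_compl {a b c : Ob} {W1 W2 W1'} (x : hom V W1 (H b c)) (y : hom V W2 (H a b))
  (f : hom V W1' W1) : mult (x ∘ f) y = mult x y ∘ (f ⊗₁ idm _).
Proof. rewrite <- m_comp, cr. reflexivity. Qed.
Lemma m_compr {a b c : Ob} {W1 W2 W2'} (x : hom V W1 (H b c)) (y : hom V W2 (H a b))
  (g : hom V W2' W2) : mult x (y ∘ g) = mult x y ∘ (idm _ ⊗₁ g).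
Proof. rewrite <- m_comp, cr. reflexivity. Qed.

Hypothesis HU : is_VCat (thCat U).

Lemma m_assoc {a b c d : Ob} {W1 W2 W3} (x : hom V W1 (H c d)) (y : hom V W2 (H b c))
  (z : hom V W3 (H a b)) : mult (mult x y) z = mult x (mult y z) ∘ assoc _ _ _.
Proof.
  destruct HU as [HA _]. unfold mult. simpl in HA.
  rewrite tcl2, cA, <- HA, <- !cA. f_equal.
  rewrite tcr2, <- !cA. f_equal. rewrite assoc_nat. reflexivity.
Qed.
Lemma m_assoc' {a b c d : Ob} {W1 W2 W3} (x : hom V W1 (H c d)) (y : hom V W2 (H b c))
  (z : hom V W3 (H a b)) : mult x (mult y z) = mult (mult x y) z ∘ assoc_inv _ _ _.
Proof. rewrite m_assoc, <- cA, assoc_iso2, cr. reflexivity. Qed.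
Lemma m_unitl {a b : Ob} {W} (x : hom V W (H a b)) : mult (tid U b) x = x ∘ lunit _.
Proof.
  destruct HU as [_ [HL _]]. unfold mult. simpl in HL.
  rewrite tsplit, cA, HL, lunit_nat. reflexivity.
Qed.
Lemma m_unitr {a b : Ob} {W} (x : hom V W (H a b)) : mult x (tid U a) = x ∘ runit _.
Proof.
  destruct HU as [_ [_ HR]]. unfold mult. simpl in HR.
  rewrite tsplit', cA, HR, runit_nat. reflexivity.
Qed.
End Enr.

Section Cot.
Context {V : CSMC} {S : Arities V} {U : JTh S}.
Notation Ob := (Jobj S).
Notation H a b := (thom U a b).

Definition bra {X : ob V} {Z Y C : Ob} {W : ob V} (c : hom V X (H Y C)) (h : hom V W (H Z Y))
  : hom V (W ⊗₀ X) (H Z C) := tcomp U Z Y C ∘ sym _ _ ∘ (h ⊗₁ c).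

Lemma bra_mult {X Z Y C W} (c : hom V X (H Y C)) (h : hom V W (H Z Y)) :
  bra c h = mult c h ∘ sym W X.
Proof. unfold bra, mult. rewrite <- cA, sym_nat, cA. reflexivity. Qed.

Lemma bra_comp {X Z Y C W W'} (c : hom V X (H Y C)) (h : hom V W (H Z Y)) (f : hom V W' W) :
  bra c (h ∘ f) = bra c h ∘ (f ⊗₁ idm X).
Proof. unfold bra. rewrite tcl, cA. reflexivity. Qed.

Lemma cot_map_bra {X Z Y C W} (c : hom V X (H Y C)) (h : hom V W (H Z Y)) :
  cot_map (C := thCat U) c Z ∘ h = cur (bra c h).
Proof. unfold cot_map, bra. simpl. rewrite cur_nat, <- cA, <- tc, cl, cr. reflexivity. Qed.

Definition cotP {X : ob V} {Y C : Ob} (c : hom V X (H Y C)) : Prop :=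
  forall (Z : Ob) (W : ob V),
    (forall h1 h2 : hom V W (H Z Y), bra c h1 = bra c h2 -> h1 = h2) /\
    (forall φ : hom V (W ⊗₀ X) (H Z C), exists h, bra c h = φ).

Lemma cot_to_P {X : ob V} {Y C : Ob} (c : hom V X (H Y C)) :
  is_cotensor (C := thCat U) c -> cotP c.
Proof.
  intros Hc Z W. destruct (Hc Z) as [g [Hg1 Hg2]]. split.
  - intros h1 h2 E. apply (cancel_l g (cot_map (C := thCat U) c Z)); [exact Hg1|].
    rewrite !cot_map_bra, E. reflexivity.
  - intros φ. exists (g ∘ cur φ). apply cur_inj. rewrite <- cot_map_bra, cA, Hg2, cl.
    reflexivity.
Qed.

Lemma cur_ev_id (a b : ob V) : cur (ev a b) = idm _.
Proof. rewrite <- (cur_ev (idm (ihom a b))), ti, cr. reflexivity. Qed.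

Lemma P_to_cot {X : ob V} {Y C : Ob} (c : hom V X (H Y C)) :
  cotP c -> is_cotensor (C := thCat U) c.
Proof.
  intros P Z. destruct (P Z (ihom X (H Z C))) as [_ Hs].
  destruct (Hs (ev _ _)) as [h Hh].
  assert (E1 : cot_map (C := thCat U) c Z ∘ h = idm _).
  { rewrite cot_map_bra, Hh. apply cur_ev_id. }
  exists h. split; [|exact E1].
  destruct (P Z (H Z Y)) as [Hi _]. apply Hi. apply cur_inj.
  rewrite <- !cot_map_bra. simpl in *. rewrite cA, E1, cl, cr. reflexivity.
Qed.

Lemma cast_mult {a a' b b' c c' : Ob} (e1 : a = a') (e2 : b = b') (e3 : c = c') {W1 W2}
  (x : hom V W1 (H b c)) (y : hom V W2 (H a b)) :
  castU e1 e3 ∘ mult x y = mult (castU e2 e3 ∘ x) (castU e1 e2 ∘ y).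
Proof. destruct e1, e2, e3. simpl. rewrite !cl. reflexivity. Qed.

Lemma cast_tid {a a' : Ob} (e : a = a') : castU e e ∘ tid U a = tid U a'.
Proof. destruct e. simpl. apply cl. Qed.

Lemma cast_bra {X : ob V} {Z Z' Y Y' C C' : Ob} {W} (e1 : Z = Z') (e2 : Y = Y') (e3 : C = C')
  (c : hom V X (H Y C)) (h : hom V W (H Z Y)) :
  bra (castU e2 e3 ∘ c) (castU e1 e2 ∘ h) = castU e1 e3 ∘ bra c h.
Proof. destruct e1, e2, e3. simpl. rewrite !cl. reflexivity. Qed.

Lemma cast_cot {X : ob V} {Y Y' C C' : Ob} (e2 : Y = Y') (e3 : C = C') (c : hom V X (H Y C)) :
  is_cotensor (C := thCat U) c -> is_cotensor (C := thCat U) (castU e2 e3 ∘ c).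
Proof. destruct e2, e3. simpl. rewrite cl. auto. Qed.

Lemma cast_inv {a a' b b' : Ob} (e1 : a = a') (e2 : b = b') :
  castU (U := U) e1 e2 ∘ castU (eq_sym e1) (eq_sym e2) = idm _.
Proof. destruct e1, e2. simpl. apply cl. Qed.

Lemma cast_inv' {a a' b b' : Ob} (e1 : a = a') (e2 : b = b') :
  castU (U := U) (eq_sym e1) (eq_sym e2) ∘ castU e1 e2 = idm _.
Proof. destruct e1, e2. simpl. apply cl. Qed.
End Cot.

Section Des.
Context {V : CSMC} {S : Arities V} {U : JTh S} (D : DesigCot U) (HD : is_designated D).
Notation Ob := (Jobj S).
Notation H a b := (thom U a b).

Lemma bra_dinv (J K Z : Ob) {W} (x : hom V W (ihom (proj1_sig J) (H Z K))) :
  bra (dcounit D J K) (dinv D J K Z ∘ x) = ev _ _ ∘ (x ⊗₁ idm _).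
Proof.
  apply cur_inj. rewrite <- cot_map_bra, cur_ev. destruct HD as [Hi _].
  destruct (Hi J K Z) as [_ H2]. simpl in *. rewrite cA, H2, cl. reflexivity.
Qed.

Lemma dcot_cot (J K : Ob) : is_cotensor (C := thCat U) (dcounit D J K).
Proof.
  intro Z. destruct HD as [Hi _]. destruct (Hi J K Z) as [H1 H2].
  exists (dinv D J K Z). split; assumption.
Qed.

Lemma bra_cotf (J K L : Ob) {W} (g : hom V W (H K L)) :
  bra (dcounit D J L) (cotf D J K L ∘ g) = mult g (dcounit D J K).
Proof.
  unfold cotf. rewrite <- cA, bra_dinv, tcl, cA, ev_cur, <- cA, <- tc, cl, cr.
  reflexivity.
Qed.

Lemma bra_cotV (J K X : Ob) {W} (h : hom V W (ihom (proj1_sig K) (proj1_sig J))) :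
  bra (dcounit D K X) (cotV D J K X ∘ h) = dcounit D J X ∘ ev _ _ ∘ (h ⊗₁ idm _).
Proof.
  unfold cotV. rewrite <- cA, bra_dinv, tcl, cA, ev_cur. reflexivity.
Qed.

Definition eps (L : Ob) : hom V (proj1_sig L) (H L (JI S)) :=
  ttau U L (JI S) ∘ cur (runit (proj1_sig L)).

Lemma eps_cast (L : Ob) : castU (dcot_JI D L) eq_refl ∘ dcounit D L (JI S) = eps L.
Proof. destruct HD as [_ [H2 _]]. apply H2. Qed.

Lemma eps_cot (L : Ob) : is_cotensor (C := thCat U) (eps L).
Proof. rewrite <- eps_cast. apply cast_cot. apply dcot_cot. Qed.
End Des.

Section Wedges.
Context {V : CSMC} {S : Arities V} {U : JTh S} (HU : is_VCat (thCat U)).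
Notation Ob := (Jobj S).
Notation H a b := (thom U a b).

Lemma W1gen {x0 x1 x2 y0 y1 y2 : Ob} {X1 X2 C : ob V}
  (a' : hom V X1 (H y1 y2)) (b' : hom V X2 (H y0 y1))
  (a : hom V X1 (H x1 x2)) (b : hom V X2 (H x0 x1))
  (f0 : hom V C (H x0 y0)) (f1 : hom V C (H x1 y1)) (f2 : hom V C (H x2 y2)) :
  mult b' f0 = mult f1 b ∘ sym X2 C -> mult a' f1 = mult f2 a ∘ sym X1 C ->
  mult (mult a' b') f0 = mult f2 (mult a b) ∘ sym (X1 ⊗₀ X2) C.
Proof.
  intros Hb Ha.
  rewrite (m_assoc HU), Hb, m_compr, (m_assoc' HU), Ha, m_compl, (m_assoc HU).
  rewrite H2, !cA. reflexivity.
Qed.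

Lemma W2gen {x y : Ob} {C : ob V} (f : hom V C (H x y)) :
  mult (tid U y) f = mult f (tid U x) ∘ sym unit C.
Proof. rewrite (m_unitl HU), (m_unitr HU), <- cA, K4'. reflexivity. Qed.

Lemma m_sym {X Z Y C W} (c : hom V X (H Y C)) (h : hom V W (H Z Y)) :
  mult c h = bra c h ∘ sym X W.
Proof. rewrite bra_mult, <- cA, sym_inv, cr. reflexivity. Qed.
End Wedges.

Lemma Str3 {V : CSMC} (K P C : ob V) :
  sym (K ⊗₀ P) C ∘ (assoc_inv K P C ∘ sym (P ⊗₀ C) K) =
  assoc C K P ∘ ((sym K C ⊗₁ idm P) ∘ (assoc_inv K C P ∘ (sym (C ⊗₀ P) K ∘ (sym P C ⊗₁ idm K)))).
Proof.
  rewrite H2, sym_nat, <- !cA. f_equal. f_equal. f_equal. f_equal.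
  rewrite cA, assoc_iso2, cl. reflexivity.
Qed.

Section W3.
Context {V : CSMC} {S : Arities V} {U : JTh S} (HU : is_VCat (thCat U))
  (D : DesigCot U) (HD : is_designated D).
Notation Ob := (Jobj S).
Notation H a b := (thom U a b).

Lemma bra_cotV1 (J K X : Ob) :
  bra (dcounit D K X) (cotV D J K X) = dcounit D J X ∘ ev _ _.
Proof. rewrite <- (cr (cotV D J K X)), (bra_cotV D HD), ti, cr. reflexivity. Qed.
Lemma bra_cotf1 (J K L : Ob) :
  bra (dcounit D J L) (cotf D J K L) = mult (idm _) (dcounit D J K).
Proof. rewrite <- (cr (cotf D J K L)), (bra_cotf D HD). reflexivity. Qed.

Lemma W3gen (J K L L' : Ob) {C} (g : hom V C (H L L')) :
  mult (cotV D J K L') (cotf D J L L' ∘ g)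
  = mult (cotf D K L L' ∘ g) (cotV D J K L) ∘ sym _ C.
Proof.
  destruct (cot_to_P _ (dcot_cot D HD K L') (dcot D J L) (ihom (proj1_sig K) (proj1_sig J) ⊗₀ C))
    as [Hinj _].
  apply Hinj. rewrite (bra_comp _ _ (sym _ _)), !bra_mult, (m_assoc' HU), (m_assoc' HU).
  rewrite (m_sym (dcounit D K L') (cotV D J K L')), bra_cotV1.
  rewrite (m_sym (dcounit D K L') (cotf D K L L' ∘ g)), (bra_cotf D HD).
  rewrite <- (cA (sym _ _) (ev _ _) (dcounit D J L')), m_comp.
  rewrite (m_sym (dcounit D J L') (cotf D J L L')), bra_cotf1.
  rewrite m_compl, (m_assoc HU), (m_sym (dcounit D K L) (cotV D J K L)), bra_cotV1.
  rewrite <- (cA (_ ⊗₁ g) (sym _ _)), sym_nat, cA, <- m_comp, cl.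
  rewrite !m_compr, !tcr.
  rewrite <- !cA. f_equal. f_equal. f_equal. apply Str3.
Qed.
End W3.

Lemma UL {V : CSMC} (B C : ob V) :
  ulcomp unit B C ∘ (idm _ ⊗₁ cur (runit B)) = cur (runit C) ∘ ev B C.
Proof.
  unfold ulcomp. rewrite !cur_nat. f_equal.
  rewrite <- cA, assoc_nat, cA, <- (cA _ (idm _ ⊗₁ ev _ _)), <- tc, cl, ev_cur.
  rewrite <- cA, <- K1, runit_nat. reflexivity.
Qed.

Section C4.
Context {V : CSMC} {S : Arities V} {U : JTh S} (HUt : is_Jtheory U)
  (D : DesigCot U) (HD : is_designated D).
Notation Ob := (Jobj S).
Notation H a b := (thom U a b).

Lemma C4 (J K : Ob) :
  castU (dcot_JI D J) (dcot_JI D K) ∘ cotV D J K (JI S) = ttau U J K.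
Proof.
  destruct (cot_to_P _ (eps_cot D HD K) J (ihom (proj1_sig K) (proj1_sig J))) as [Hinj _].
  apply Hinj. rewrite <- (eps_cast D HD K), cast_bra, (eps_cast D HD K).
  rewrite <- (cr (cotV D J K (JI S))), (bra_cotV D HD), ti, cr, cA, (eps_cast D HD J).
  destruct HUt as [_ [[Hf _] _]]. simpl in Hf.
  rewrite bra_mult. unfold eps, mult. rewrite tcl, cA.
  rewrite <- Hf, <- !cA. f_equal. rewrite !cA.
  rewrite <- (cA (_ ⊗₁ _) (sym _ _) (ulcomp _ _ _)), sym_nat, cA, <- cA, sym_inv, cr. symmetry. exact (UL _ _).
Qed.
End C4.

Section Isos.
Context {V : CSMC}.
Lemma iso_comp {a b c : ob V} (f : hom V a b) (g : hom V b c) :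
  is_iso f -> is_iso g -> is_iso (g ∘ f).
Proof.
  intros [f' [F1 F2]] [g' [G1 G2]]. exists (f' ∘ g'). split.
  - rewrite <- cA, (cA f g g'), G1, cl. exact F1.
  - rewrite <- cA, (cA g' f' f), F2, cl. exact G2.
Qed.
Lemma iso_sym (a b : ob V) : is_iso (sym a b).
Proof. exists (sym b a). split; apply sym_inv. Qed.
Lemma iso_assoc (a b c : ob V) : is_iso (assoc a b c).
Proof. exists (assoc_inv a b c). split; [apply assoc_iso1|apply assoc_iso2]. Qed.
Lemma iso_assoc_inv (a b c : ob V) : is_iso (assoc_inv a b c).
Proof. exists (assoc a b c). split; [apply assoc_iso2|apply assoc_iso1]. Qed.
Lemma iso_tl {a b : ob V} (f : hom V a b) (c : ob V) : is_iso f -> is_iso (f ⊗₁ idm c).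
Proof. intros [g [G1 G2]]. exists (g ⊗₁ idm c). split; apply iso_t_l; assumption. Qed.
Lemma iso_tr {a b : ob V} (f : hom V a b) (c : ob V) : is_iso f -> is_iso (idm c ⊗₁ f).
Proof. intros [g [G1 G2]]. exists (idm c ⊗₁ g). split; apply iso_t_r; assumption. Qed.
Lemma iso_cancel {a b c : ob V} (s : hom V a b) (x y : hom V b c) :
  is_iso s -> x ∘ s = y ∘ s -> x = y.
Proof. intros [s' [S1 S2]] E. apply (cancel_r s s'); assumption. Qed.
End Isos.

Section CL.
Context {V : CSMC} {S : Arities V} {U : JTh S} (HU : is_VCat (thCat U))
  (D : DesigCot U) (HD : is_designated D).
Notation Ob := (Jobj S).
Notation H a b := (thom U a b).

Definition cL (K L : Ob) := cotf D K L (JI S) ∘ eps L.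

Lemma LA (K L Z : Ob) {W} (h : hom V W (H Z (dcot D K L))) :
  bra (dcounit D K (JI S)) (bra (cL K L) h)
  = mult (eps L) (mult (dcounit D K L) h)
    ∘ (assoc _ _ W ∘ (sym (proj1_sig K) (proj1_sig L) ⊗₁ idm W) ∘ assoc_inv _ _ W
       ∘ (idm _ ⊗₁ sym W (proj1_sig L)) ∘ sym (W ⊗₀ proj1_sig L) (proj1_sig K)).
Proof.
  rewrite !bra_mult, m_compr, (m_assoc' HU). unfold cL.
  rewrite (m_compr (dcounit D K (JI S))), (m_sym (dcounit D K (JI S)) (cotf D K L (JI S))).
  rewrite (bra_cotf1 D HD), <- (cA (idm _ ⊗₁ eps L) (sym _ _)), sym_nat, cA, <- m_comp, cl, cr.
  rewrite m_compl, (m_assoc HU). rewrite !cA. reflexivity.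
Qed.

Lemma LB (K L Z : Ob) {W} (h : hom V W (H Z (dcot D K L))) :
  bra (eps L) (bra (dcounit D K L) h)
  = mult (eps L) (mult (dcounit D K L) h)
    ∘ ((idm _ ⊗₁ sym W (proj1_sig K)) ∘ sym (W ⊗₀ proj1_sig K) (proj1_sig L)).
Proof. rewrite !bra_mult, m_compr, cA. reflexivity. Qed.

Lemma cL_cot (K L : Ob) : is_cotensor (C := thCat U) (cL K L).
Proof.
  apply P_to_cot. intros Z W.
  destruct (cot_to_P _ (dcot_cot D HD K L) Z W) as [B1i B1s].
  destruct (cot_to_P _ (eps_cot D HD L) Z (W ⊗₀ proj1_sig K)) as [B2i B2s].
  destruct (cot_to_P _ (dcot_cot D HD K (JI S)) Z (W ⊗₀ proj1_sig L)) as [B3i B3s].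
  assert (ISa : is_iso (assoc (proj1_sig L) (proj1_sig K) W
      ∘ (sym (proj1_sig K) (proj1_sig L) ⊗₁ idm W) ∘ assoc_inv _ _ W
      ∘ (idm _ ⊗₁ sym W (proj1_sig L)) ∘ sym (W ⊗₀ proj1_sig L) (proj1_sig K))).
  { repeat apply iso_comp; auto using iso_assoc, iso_assoc_inv, iso_tl, iso_tr, iso_sym. }
  assert (ISb : is_iso ((idm _ ⊗₁ sym W (proj1_sig K)) ∘ sym (W ⊗₀ proj1_sig K) (proj1_sig L))).
  { repeat apply iso_comp; auto using iso_assoc, iso_assoc_inv, iso_tl, iso_tr, iso_sym. }
  split.
  - intros h1 h2 E. apply B1i, B2i. rewrite !LB. f_equal.
    apply (iso_cancel _ _ _ ISa). rewrite <- !LA, E. reflexivity.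
  - intros φ. destruct ISa as [Sa' [Sa1 Sa2]].
    destruct (B2s (bra (dcounit D K (JI S)) φ ∘ Sa' ∘
                   ((idm _ ⊗₁ sym W (proj1_sig K)) ∘ sym (W ⊗₀ proj1_sig K) (proj1_sig L))))
      as [k Hk].
    destruct (B1s k) as [h Hh]. exists h. apply B3i. rewrite LA.
    assert (E : mult (eps L) (mult (dcounit D K L) h) = bra (dcounit D K (JI S)) φ ∘ Sa').
    { apply (iso_cancel _ _ _ ISb). rewrite <- LB, Hh, Hk. reflexivity. }
    rewrite E, <- cA, Sa1, cr. reflexivity.
Qed.
End CL.

Section Main.
Context {V : CSMC} {S : Arities V} {T U : JTh S}
  (A : forall J K : Jobj S, hom V (thom T J K) (thom U J K))
  (D : DesigCot U) (E : CommEnds D).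
Notation Ob := (Jobj S).
Notation H a b := (thom U a b).

Definition wdg (J K : Ob) {X : ob V} (p : forall L, hom V X (H (dcot D J L) (dcot D K L))) :=
  forall L L' : Ob, mult (p L') (cotf D J L L' ∘ A L L')
                    = mult (cotf D K L L' ∘ A L L') (p L) ∘ sym X (thom T L L').

Lemma wdg_wedge (J K : Ob) {X : ob V} (p : forall L, hom V X (H (dcot D J L) (dcot D K L))) :
  wdg J K p <-> wedge (F := cotA A D J) (G := cotA A D K) p.
Proof. split; intros Hw L L'; apply (Hw L L'). Qed.

Hypothesis HE : is_commutant_ends A E.

Lemma end_fac (J K : Ob) {X} (q : forall L, hom V X (H (dcot D J L) (dcot D K L))) :
  wdg J K q -> forall L, cproj E J K L ∘ @cfactor _ _ _ _ E J K X q = q L.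
Proof. intros Hw. apply (proj1 (proj2 (HE J K) X q (proj1 (wdg_wedge J K q) Hw))). Qed.

Lemma end_wedge (J K : Ob) : wdg J K (cproj E J K).
Proof. apply wdg_wedge. apply (proj1 (HE J K)). Qed.

Lemma wdg_pre (J K : Ob) {X Y} (p : forall L, hom V X (H (dcot D J L) (dcot D K L)))
  (h : hom V Y X) : wdg J K p -> wdg J K (fun L => p L ∘ h).
Proof.
  intros Hw L L'. rewrite m_compl, Hw, m_compr, <- !cA, sym_nat. reflexivity.
Qed.

Lemma end_jmono (J K : Ob) {X} (f g : hom V X (cE E J K)) :
  (forall L, cproj E J K L ∘ f = cproj E J K L ∘ g) -> f = g.
Proof.
  intros Hfg.
  assert (Hw : wdg J K (fun L => cproj E J K L ∘ f)) by (apply wdg_pre, end_wedge).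
  destruct (proj2 (HE J K) X _ (proj1 (wdg_wedge J K _) Hw)) as [_ Hu].
  rewrite (Hu f), (Hu g); auto. intro L. symmetry. apply Hfg.
Qed.

Hypothesis HUv : is_VCat (thCat U).
Hypothesis HD : is_designated D.

Lemma comp_wdg (J K M : Ob) :
  wdg J M (fun L => mult (cproj E K M L) (cproj E J K L)).
Proof.
  intros L L'. apply (W1gen HUv) with (f1 := cotf D K L L' ∘ A L L').
  - apply end_wedge.
  - apply end_wedge.
Qed.

Lemma id_wdg (J : Ob) : wdg J J (fun L => tid U (dcot D J L)).
Proof. intros L L'. apply (W2gen HUv). Qed.

Lemma cotV_wdg (J K : Ob) : wdg J K (fun L => cotV D J K L).
Proof. intros L L'. apply (W3gen HUv D HD). Qed.

Hypothesis HA : is_Jmorphism A.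

Lemma KEY (J K L : Ob) :
  bra (cL D K L) (cproj E J K L) = mult (cproj E J K (JI S)) (cotf D J L (JI S) ∘ eps L).
Proof.
  assert (W := end_wedge J K L (JI S)).
  apply (f_equal (fun k => k ∘ (idm _ ⊗₁ (ttau T L (JI S) ∘ cur (runit (proj1_sig L)))))) in W.
  simpl in W. rewrite <- m_compr in W.
  rewrite <- (cA (idm _ ⊗₁ _) (sym _ _)), sym_nat, (cA (sym _ _) (_ ⊗₁ _) (mult _ _)), <- m_compl in W.
  destruct HA as [_ HA2].
  unfold cL, eps. rewrite bra_mult.
  rewrite <- !cA in W. rewrite !(cA (cur _) (ttau T L (JI S)) (A L (JI S))), HA2 in W. exact (eq_sym W).
Qed.

Lemma iota_smono (J K : Ob) : strong_mono (iota E J K).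
Proof.
  assert (Hb : forall L W (f : hom V W (cE E J K)),
     bra (cL D K L) (cproj E J K L ∘ f)
     = mult (cproj E J K (JI S) ∘ f) (cotf D J L (JI S) ∘ eps L)).
  { intros. rewrite bra_comp, KEY, m_compl. reflexivity. }
  assert (Hpi : forall W (f g : hom V W (cE E J K)), iota E J K ∘ f = iota E J K ∘ g ->
             cproj E J K (JI S) ∘ f = cproj E J K (JI S) ∘ g).
  { intros W f g Hfg. unfold iota in Hfg.
    apply (cancel_l (castU (eq_sym (dcot_JI D J)) (eq_sym (dcot_JI D K)))
                    (castU (dcot_JI D J) (dcot_JI D K))); [apply cast_inv'|].
    rewrite !cA. exact Hfg. }
  split.
  - intros W f g Hfg. apply end_jmono. intro L.
    destruct (cot_to_P _ (cL_cot HUv D HD K L) (dcot D J L) W) as [Hi _].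
    apply Hi. rewrite !Hb, (Hpi _ _ _ Hfg). reflexivity.
  - intros a b e He u v Hvu.
    set (v' := castU (eq_sym (dcot_JI D J)) (eq_sym (dcot_JI D K)) ∘ v).
    assert (Hv' : v' ∘ e = cproj E J K (JI S) ∘ u).
    { unfold v'. rewrite <- cA, Hvu. unfold iota. rewrite !cA, cast_inv', cl. reflexivity. }
    assert (Ex : forall L, exists h : hom V b (H (dcot D J L) (dcot D K L)),
               bra (cL D K L) h = mult v' (cotf D J L (JI S) ∘ eps L)).
    { intro L. destruct (cot_to_P _ (cL_cot HUv D HD K L) (dcot D J L) b) as [_ Hs]. apply Hs. }
    set (q := fun L => proj1_sig (constructive_indefinite_description _ (Ex L))).
    assert (Hq : forall L, bra (cL D K L) (q L) = mult v' (cotf D J L (JI S) ∘ eps L)).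
    { intro L. unfold q. destruct (constructive_indefinite_description _ _) as [h Hh]. exact Hh. }
    assert (Hqe : forall L, q L ∘ e = cproj E J K L ∘ u).
    { intro L. destruct (cot_to_P _ (cL_cot HUv D HD K L) (dcot D J L) a) as [Hi _].
      apply Hi. rewrite bra_comp, Hq, Hb, <- m_compl, Hv'. reflexivity. }
    assert (Hw : wdg J K q).
    { intros L L'. apply (epi_tens e He). rewrite <- m_compl, Hqe.
      rewrite <- (cA (e ⊗₁ _) (sym _ _)), sym_nat, (cA (sym _ _) (_ ⊗₁ e)), <- m_compr, Hqe.
      apply (wdg_pre J K _ u (end_wedge J K)). }
    exists (@cfactor _ _ _ _ E J K b q). split.
    + apply end_jmono. intro L. rewrite cA, (end_fac J K q Hw). apply Hqe.
    + unfold iota. rewrite <- cA, (end_fac J K q Hw).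
      assert (HqI : q (JI S) = v').
      { apply He. rewrite Hqe, Hv'. reflexivity. }
      rewrite HqI. unfold v'. rewrite cA, cast_inv, cl. reflexivity.
Qed.
End Main.

Theorem proposition7p5 (V : CSMC) (S : Arities V) (T U : JTh S)
    (A : forall J K : Jobj S, hom V (thom T J K) (thom U J K))
    (D : DesigCot U) (E : CommEnds D) :
  is_Jtheory T -> is_Jtheory U -> is_Jmorphism A ->
  is_designated D -> is_commutant_ends A E ->
  is_Jmorphism (T := commutant E) (U := U) (iota E) /\
  (forall J K : Jobj S, strong_mono (iota E J K)).
Proof.
  intros HT HU HA HD HE.
  pose proof HU as HU0. destruct HU0 as [HUv _].
  split.
  - split.
    + split.
      * intros a b c. simpl. unfold iota.
        rewrite <- cA, (end_fac A D E HE a c _ (comp_wdg A D E HE HUv a b c)).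
        rewrite (cast_mult _ (dcot_JI D b)). reflexivity.
      * intros a. simpl. unfold iota.
        rewrite <- cA, (end_fac A D E HE a a _ (id_wdg A D HUv a)).
        apply cast_tid.
    + intros J K. simpl. unfold iota.
      rewrite <- cA, (end_fac A D E HE J K _ (cotV_wdg A D HUv HD J K)).
      apply (C4 HU D HD).
  - intros J K. apply (iota_smono A D E HE HUv HD HA).
Qed.
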